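(* Let $q$ be a prime power and $n$ a positive integer, and let $U,V$ be two distinct $\mathbb{F}_q$-subspaces of $\mathbb{F}_{q^n}$ such that $U\cap V=\{0\}$ and $\dim(U\cap\alpha V)\leq 1$ for every $\alpha\in\mathbb{F}_{q^n}^*$. If $$\mathbb{F}_q+(U+V)+UV=\mathbb{F}_q\oplus(U+V)\oplus UV,$$ then $\dim\big((\mathbb{F}_q+U)\cap\alpha(\mathbb{F}_q+V)\big)\leq 1$ for every $\alpha\in\mathbb{F}_{q^n}^*$.
   Context: All subspaces are $\mathbb{F}_q$-subspaces of $\mathbb{F}_{q^n}$, with $\mathbb{F}_q\subseteq\mathbb{F}_{q^n}$ the prime-power subfield. For subspaces $U,V$: $U+V=\{u+v\mid u\in U,v\in V\}$, $UV$ is the $\mathbb{F}_q$-span of $\{uv\mid u\in U,v\in V\}$, and $\oplus$ denotes that the sum is direct. *)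

(* Defs.v *)
From HB Require Import structures.
From mathcomp Require Import all_boot all_order all_algebra all_field.
Set Implicit Arguments. Unset Strict Implicit. Unset Printing Implicit Defensive.
Import GRing.Theory.
Local Open Scope ring_scope.

Definition Fq_sub (F : finFieldType) (L : fieldExtType F) : {vspace L} := 1%VS.

Definition scalev (F : finFieldType) (L : fieldExtType F) (a : L) (V : {vspace L})
  : {vspace L} := (<[a]> * V)%VS.

(* We spell it out
   because directv would syntactically split the middle block U + V. *)
Definition directv3 (F : finFieldType) (L : fieldExtType F) (A B C : {vspace L})
  : bool := \dim (A + B + C)%VS == (\dim A + \dim B + \dim C)%N.

Lemma directv3E (F : finFieldType) (L : fieldExtType F) (A B C : {vspace L}) :
  directv3 A B C = directv (A + B + C)%VS.
Proof. by rewrite /directv3 directvE. Qed.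

(* Main.v *)
Require Import Defs.
From HB Require Import structures.
From mathcomp Require Import all_boot all_order all_algebra all_field.
From mathcomp Require Import zify ring.
Local Open Scope ring_scope.
Import GRing.Theory.

Section Aux.
Variables (F : finFieldType) (L : fieldExtType F).
Implicit Types A B C U V : {vspace L}.

Lemma dir3_split (A B C : {vspace L}) :
  directv3 A B C -> (A :&: B = 0)%VS /\ ((A + B) :&: C = 0)%VS.
Proof.
rewrite /directv3 => /eqP H.
have H1 := dimv_sum_cap (A + B)%VS C.
have H2 := dimv_sum_cap A B.
have : (\dim (A :&: B) + \dim ((A + B) :&: C) = 0)%N by lia.
move=> /eqP; rewrite addn_eq0 !dimv_eq0 => /andP[/eqP -> /eqP ->]; by split.
Qed.

Lemma sum3_zero {A B C : {vspace L}} {f s p} :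
  directv3 A B C -> f \in A -> s \in B -> p \in C -> f + s + p = 0 ->
  [/\ f = 0, s = 0 & p = 0].
Proof.
move=> /dir3_split [hAB hABC] fA sB pC E.
have hp : p = 0.
  apply/eqP; rewrite -memv0 -hABC memv_cap pC andbT.
  have -> : p = - (f + s) by apply/eqP; rewrite -addr_eq0 addrC E.
  by rewrite memvN memv_add.
move: E; rewrite hp addr0 => E.
have hf : f = 0.
  apply/eqP; rewrite -memv0 -hAB memv_cap fA /=.
  have -> : f = - s by apply/eqP; rewrite -addr_eq0 E.
  by rewrite memvN.
by split => //; move: E; rewrite hf add0r.
Qed.

Lemma sum2_zero {U V : {vspace L}} {x y} :
  (U :&: V)%VS = 0%VS -> x \in U -> y \in V -> x + y = 0 -> x = 0 /\ y = 0.
Proof.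
move=> hUV xU yV E.
have hx : x = 0.
  apply/eqP; rewrite -memv0 -hUV memv_cap xU /=.
  have -> : x = - y by apply/eqP; rewrite -addr_eq0 E.
  by rewrite memvN.
by split => //; move: E; rewrite hx add0r.
Qed.

Lemma key (U V : {vspace L}) k1 u1 m1 v1 k2 u2 m2 v2 :
  (U :&: V)%VS = 0%VS ->
  directv3 1%VS (U + V)%VS (U * V)%VS ->
  u1 \in U -> u2 \in U -> v1 \in V -> v2 \in V ->
  (k1%:A + u1) * (m2%:A + v2) = (k2%:A + u2) * (m1%:A + v1) ->
  [/\ k1 * m2 = k2 * m1, k1 *: v2 = k2 *: v1 & m2 *: u1 = m1 *: u2].
Proof.
move=> hUV hd u1U u2U v1V v2V E.
have E2 : (k1%:A * m2%:A - k2%:A * m1%:A) + ((k1%:A * v2 - k2%:A * v1) + (m2%:A * u1 - m1%:A * u2))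
   + (u1 * v2 - u2 * v1) = 0.
  set K1 := k1%:A; set K2 := k2%:A; set M1 := m1%:A; set M2 := m2%:A.
  move: E; rewrite -/K1 -/K2 -/M1 -/M2 => E.
  have -> : K1 * M2 - K2 * M1 + (K1 * v2 - K2 * v1 + (M2 * u1 - M1 * u2)) + (u1 * v2 - u2 * v1)
     = (K1 + u1) * (M2 + v2) - (K2 + u2) * (M1 + v1) by ring.
  by rewrite E subrr.
have mm1 : k1%:A * m2%:A - k2%:A * m1%:A \in (1%VS : {vspace L}).
  by rewrite !mulr_algl memvB // memvZ // rpredZ // memv_line.
have mm2 : (k1%:A * v2 - k2%:A * v1 + (m2%:A * u1 - m1%:A * u2)) \in (U + V)%VS.
  by rewrite addrC; apply: memv_add; rewrite !mulr_algl memvB // memvZ.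
have mm3 : u1 * v2 - u2 * v1 \in (U * V)%VS by rewrite memvB // memv_mul.
have [f0 s0 p0] := sum3_zero hd mm1 mm2 mm3 E2.
have [] := sum2_zero (U := V) (V := U) _ _ _ s0.
- by rewrite capvC.
- by rewrite !mulr_algl memvB // memvZ.
- by rewrite !mulr_algl memvB // memvZ.
rewrite !mulr_algl => /eqP; rewrite subr_eq0 => /eqP h1 /eqP; rewrite subr_eq0 => /eqP h2.
split => //.
move/eqP: f0; rewrite !mulr_algl !scalerA -scalerBl scaler_eq0 oner_eq0 orbF subr_eq0.
by move/eqP.
Qed.
End Aux.
Lemma dec (F : finFieldType) (L : fieldExtType F) (U V : {vspace L}) (a x : L) :
  x \in ((Fq_sub L + U) :&: scalev a (Fq_sub L + V))%VS ->
  exists k u m v, [/\ u \in U, v \in V, x = k%:A + u & x = a * (m%:A + v)].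
Proof.
rewrite memv_cap => /andP[/memv_addP [l lF [u uU e]]].
rewrite /scalev prodvC => /memv_cosetP [y /memv_addP [l' l'F [v vV ey]] E].
case/vlineP: lF => k ek; case/vlineP: l'F => m Em.
exists k, u, m, v; split => //; first by rewrite e ek.
by rewrite E ey Em mulrC.
Qed.

Arguments dec {F L U V a x}.
Arguments key {F L U V k1 u1 m1 v1 k2 u2 m2 v2}.

Lemma scale_expand (F : finFieldType) (L : fieldExtType F) (c m : F) (v : L) :
  c *: (m%:A + v) = (c * m)%:A + c *: v.
Proof. by rewrite scalerDr scalerA. Qed.

Theorem lemma3p9 (F : finFieldType) (L : fieldExtType F) (U V : {vspace L}) :
  U != V ->
  (U :&: V)%VS = 0%VS ->
  (forall a : L, a != 0 -> (\dim (U :&: scalev a V) <= 1)%N) ->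
  directv3 (Fq_sub L) (U + V)%VS (U * V)%VS ->
  forall a : L, a != 0 ->
    (\dim ((Fq_sub L + U) :&: scalev a (Fq_sub L + V)) <= 1)%N.
Proof.
move=> _ hUV hdim hd a a0.
set W := ((Fq_sub L + U) :&: scalev a (Fq_sub L + V))%VS.
case: (boolP (W <= U :&: scalev a V)%VS) => sub.
  exact: leq_trans (dimvS sub) (hdim a a0).
have : ~~ all (fun x => x \in (U :&: scalev a V)%VS) (vbasis W).
  apply: contra sub => /allP h; rewrite -(span_basis (vbasisP W)).
  by apply/span_subvP => y /h.
case/allPn => x1 /vbasis_mem x1W x1n.
have [k1 [u1 [m1 [v1 [u1U v1V e1 e1']]]]] := dec x1W.
suff : (W <= <[x1]>)%VS.
  by move/dimvS => h; apply: leq_trans h _; rewrite dim_vline; case: (x1 != 0).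
have key1 : forall x2, x2 \in W -> exists k2 m2, [/\ k1 * m2 = k2 * m1,
    k1 *: x2 = k2 *: x1 & m1 *: x2 = m2 *: x1].
  move=> x2 /dec [k2 [u2 [m2 [v2 [u2U v2V e2 e2']]]]].
  have E : (k1%:A + u1) * (m2%:A + v2) = (k2%:A + u2) * (m1%:A + v1).
    rewrite -e1 -e2 e1' e2' -!mulrA; congr (_ * _); exact: mulrC.
  have [h1 h2 h3] := key hUV (hd : directv3 1%VS _ _) u1U u2U v1V v2V E.
  exists k2, m2; split => //.
    by rewrite e2' e1' !scalerAr !scale_expand h1 h2.
  by rewrite e2 e1 !scale_expand [m1 * k2]mulrC [m2 * k1]mulrC h1 h3.
apply/subvP => x2 x2W.
have [k2 [m2 [_ hk hm]]] := key1 x2 x2W.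
case: (eqVneq k1 0) => [k0|kn0].
  case: (eqVneq m1 0) => [m0|mn0].
    exfalso; move: x1n; rewrite memv_cap.
    have -> : x1 = u1 by rewrite e1 k0 scale0r add0r.
    rewrite u1U /=.
    have -> : u1 = a * v1 by rewrite -[u1]add0r -(scale0r (1 : L)) -k0 -e1 e1' m0 scale0r add0r.
    by rewrite /scalev memv_mul // memv_line.
  have -> : x2 = (m2 / m1) *: x1.
    by rewrite mulrC -scalerA -hm scalerA mulVf // scale1r.
  by rewrite memvZ // memv_line.
have -> : x2 = (k2 / k1) *: x1.
  by rewrite mulrC -scalerA -hk scalerA mulVf // scale1r.
by rewrite memvZ // memv_line.
Qed.
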